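(* Let $F=(F_1,\dots,F_n)$ with $F_i\in K[[x_1,\dots,x_n]]$, put $H_i:=x_i-F_i$, and assume each $H_i$ contains only monomials of degree $\ge 2$ and that the Jacobian determinant $j(F)=\det\big(\partial F_j/\partial x_i\big)_{i,j}$ equals $1$. Let $G=(G_1,\dots,G_n)$, $G_i\in K[[x_1,\dots,x_n]]$, be the compositional inverse of $F$ (so $G_i(F_1,\dots,F_n)=x_i$ and $F_i(G_1,\dots,G_n)=x_i$). Then for every $i$ $$G_i=\sum_{\underline p\in\mathbb N_0^n}\frac{1}{\underline p!}\,\underline\partial^{\underline p}\big(x_i H^{\underline p}\big),$$ and, more generally, for every $U\in K[[x_1,\dots,x_n]]$, $$U=\sum_{\underline p\in\mathbb N_0^n}\frac{1}{\underline p!}\,\underline\partial^{\underline p}\big(U(F)\,H^{\underline p}\big).$$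
   Context: $K$ is a field of characteristic $0$. Multi-index notation: $\underline\partial^{\underline p}=\partial_1^{p_1}\cdots\partial_n^{p_n}$ with $\partial_i=\partial/\partial x_i$ acting on formal power series, $H^{\underline p}=H_1^{p_1}\cdots H_n^{p_n}$, $\underline p!=p_1!\cdots p_n!$, and $U(F)=U(F_1,\dots,F_n)$. The sums converge in the $(x_1,\dots,x_n)$-adic topology. *)

(* Defs.v *)
From mathcomp Require Import all_boot all_order all_algebra all_fingroup.
Set Implicit Arguments. Unset Strict Implicit. Unset Printing Implicit Defensive.
Import GRing.Theory.
Local Open Scope ring_scope.

Section FPS.
Variables (K : fieldType) (n : nat).

Definition mono := {ffun 'I_n -> nat}.
Definition mdeg (m : mono) : nat := (\sum_i m i)%N.
Definition madd (a b : mono) : mono := [ffun i => (a i + b i)%N].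
Definition msub (a b : mono) : mono := [ffun i => (a i - b i)%N].
Definition mle (a b : mono) : bool := [forall i, (a i <= b i)%N].
Definition munit (i : 'I_n) : mono := [ffun j => nat_of_bool (i == j)].
Definition mzero : mono := [ffun _ => 0%N].
Definition mfact (p : mono) : nat := (\prod_i (p i)`!)%N.
(* bounded exponent vectors, used to enumerate finite index ranges *)
Definition mlow (d : nat) (a : {ffun 'I_n -> 'I_d}) : mono := [ffun i => nat_of_ord (a i)].

Definition fps := mono -> K.

Definition fps0 : fps := fun _ => 0.
Definition fps1 : fps := fun m => if m == mzero then 1 else 0.
Definition fps_X (i : 'I_n) : fps := fun m => if m == munit i then 1 else 0.
Definition fps_add (f g : fps) : fps := fun m => f m + g m.
Definition fps_sub (f g : fps) : fps := fun m => f m - g m.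
Definition fps_scale (c : K) (f : fps) : fps := fun m => c * f m.
Definition fps_mul (f g : fps) : fps := fun m =>
  \sum_(a : {ffun 'I_n -> 'I_(mdeg m).+1} | mle (mlow a) m)
     f (mlow a) * g (msub m (mlow a)).
Definition fps_exp (f : fps) (k : nat) : fps := iter k (fps_mul f) fps1.
Definition fps_mpow (F : 'I_n -> fps) (p : mono) : fps :=
  \big[fps_mul/fps1]_(i < n) fps_exp (F i) (p i).

(* Substitution U(F) = sum_p U_p F^p, for F with zero constant terms
   (then only p with |p| <= |m| contribute to the coefficient of x^m). *)
Definition fps_comp (U : fps) (F : 'I_n -> fps) : fps := fun m =>
  \sum_(p : {ffun 'I_n -> 'I_(mdeg m).+1}) U (mlow p) * fps_mpow F (mlow p) m.

Definition fps_deriv (i : 'I_n) (f : fps) : fps := fun m =>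
  (m i).+1%:R * f (madd m (munit i)).
Definition fps_derivs (p : mono) (f : fps) : fps :=
  foldr (fun i g => iter (p i) (fps_deriv i) g) f (enum 'I_n).

Definition fps_det (M : 'I_n -> 'I_n -> fps) : fps :=
  \big[fps_add/fps0]_(s : 'S_n)
     fps_scale ((-1) ^+ s) (\big[fps_mul/fps1]_(i < n) M i (s i)).

(* Summability in the (x_1,...,x_n)-adic topology: for each monomial only
   finitely many members of the family have a nonzero coefficient, and the
   sum is computed coefficientwise. *)
Definition fps_has_sum (T : mono -> fps) (S : fps) : Prop :=
  forall m, exists s : seq mono,
    [/\ uniq s, (forall p, p \notin s -> T p m = 0) & S m = \sum_(p <- s) T p m].

End FPS.

Arguments fps_X {K n} i.

(* Main.v *)
Require Import Defs.
From mathcomp Require Import all_boot all_order all_algebra all_fingroup.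
From mathcomp Require Import mpoly.
From mathcomp Require Import ring.
Set Implicit Arguments. Unset Strict Implicit. Unset Printing Implicit Defensive.
Import GRing.Theory.
Local Open Scope ring_scope.


Lemma sum_supp (T : eqType) (V : nmodType) (s1 s2 : seq T) (P : pred T) (G : T -> V) :
  uniq s1 -> uniq s2 -> (forall x, ~~ P x -> G x = 0) ->
  (forall x, P x -> (x \in s1) = (x \in s2)) ->
  \sum_(x <- s1) G x = \sum_(x <- s2) G x.
Proof.
move=> u1 u2 G0 Hm.
rewrite (bigID P) /= [X in _ + X]big1 ?addr0; last by move=> x /G0.
rewrite [RHS](bigID P) /= [X in _ + X]big1 ?addr0; last by move=> x /G0.
rewrite -[LHS]big_filter -[RHS]big_filter; apply: perm_big; apply: uniq_perm; rewrite ?filter_uniq //.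
by move=> x; rewrite !mem_filter; case Px: (P x) => //=; apply: Hm.
Qed.

Section Core.
Variables (K : fieldType) (n : nat).
Local Notation R := {mpoly K[n]}.

Definition ordp (d : nat) (p : R) := forall m : 'X_{1..n}, (mdeg m < d)%N -> p@_m = 0.

Lemma ordp_le d d' p : (d' <= d)%N -> ordp d p -> ordp d' p.
Proof. by move=> le H m lt; apply: H; apply: leq_trans le. Qed.
Lemma ordp0 d : ordp d 0. Proof. by move=> m _; rewrite mcoeff0. Qed.
Lemma ordpn0 p : ordp 0 p. Proof. by []. Qed.
Lemma ordpD d p q : ordp d p -> ordp d q -> ordp d (p + q).
Proof. by move=> Hp Hq m lt; rewrite mcoeffD Hp ?Hq ?addr0. Qed.
Lemma ordpN d p : ordp d p -> ordp d (- p).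
Proof. by move=> Hp m lt; rewrite mcoeffN Hp ?oppr0. Qed.
Lemma ordpB d p q : ordp d p -> ordp d q -> ordp d (p - q).
Proof. by move=> Hp Hq; apply: ordpD => //; apply: ordpN. Qed.
Lemma ordpZ d c p : ordp d p -> ordp d (c *: p).
Proof. by move=> Hp m lt; rewrite mcoeffZ Hp ?mulr0. Qed.
Lemma ordpMn d p k : ordp d p -> ordp d (p *+ k).
Proof. by move=> Hp m lt; rewrite mcoeffMn Hp ?mul0rn. Qed.
Lemma ordp_sum d (I : Type) (r : seq I) (P : pred I) (F : I -> R) :
  (forall i, P i -> ordp d (F i)) -> ordp d (\sum_(i <- r | P i) F i).
Proof.
move=> H; apply: (big_ind (ordp d)) => //; [exact: ordp0|exact: ordpD].
Qed.
Lemma ordpM a b p q : ordp a p -> ordp b q -> ordp (a + b) (p * q).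
Proof.
move=> Hp Hq m lt; rewrite mcoeffM big1 // => k /eqP Em.
have {lt}lt : (mdeg (k.1 : 'X_{1..n}) + mdeg (k.2 : 'X_{1..n}) < a + b)%N by rewrite -mdegD -Em.
case: (ltnP (mdeg k.1) a) => [/Hp ->|le]; first by rewrite mul0r.
rewrite Hq ?mulr0 //; rewrite -(ltn_add2l (mdeg k.1)).
by apply: leq_trans lt _; rewrite leq_add2r.
Qed.
Lemma ordpXm a : ordp (mdeg a) ('X_[a] : R).
Proof. move=> m lt; rewrite mcoeffX; case: eqP lt => [->|]; by rewrite ?ltnn. Qed.
Lemma ordp_prod (I : Type) (r : seq I) (P : pred I) (F : I -> R) (d : I -> nat) :
  (forall i, P i -> ordp (d i) (F i)) ->
  ordp (\sum_(i <- r | P i) d i)%N (\prod_(i <- r | P i) F i).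
Proof.
move=> H; apply: (big_ind2 (fun a b => ordp a b)) => //; last first.
  by move=> ? ? ? ? ? ?; apply: ordpM.
Qed.
Lemma ordp_exp d p k : ordp d p -> ordp (d * k) (p ^+ k).
Proof.
move=> H; elim: k => [|k IH]; first by rewrite muln0.
by rewrite exprS mulnS; apply: ordpM.
Qed.
Lemma ordp_deriv d i p : ordp d.+1 p -> ordp d (mderiv i p).
Proof.
move=> H m lt; rewrite mcoeff_mderiv H ?mul0rn //.
by rewrite mdegD mdeg1 addn1 ltnS.
Qed.
Lemma ordp_derivm d q p : ordp (d + mdeg q) p -> ordp d (p^`M[q]).
Proof.
move=> H m lt; rewrite mcoeff_mderivm H ?mul0rn //.
by rewrite mdegD addnC ltn_add2r.
Qed.

Definition bm N : seq 'X_{1..n} := map val (enum {: 'X_{1..n < N.+1}}).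
Lemma bm_uniq N : uniq (bm N).
Proof. by rewrite map_inj_uniq ?enum_uniq //; apply: val_inj. Qed.
Lemma mem_bm N p : (p \in bm N) = (mdeg p <= N)%N.
Proof.
apply/mapP/idP => [[k _ ->]|le]; first by rewrite -ltnS bmdeg.
have lt : (mdeg p < N.+1)%N by [].
by exists (BMultinom lt); rewrite ?mem_enum.
Qed.
Lemma sum_bm (V : nmodType) N (G : 'X_{1..n} -> V) :
  \sum_(k : 'X_{1..n < N.+1}) G (val k) = \sum_(p <- bm N) G p.
Proof. by rewrite /bm big_map big_enum. Qed.

Lemma bm_split (V : nmodType) N N' (G : 'X_{1..n} -> V) : (N <= N')%N ->
  \sum_(p <- bm N') G p = \sum_(p <- bm N) G p + \sum_(p <- bm N' | (N < mdeg p)%N) G p.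
Proof.
move=> le; rewrite (bigID (fun p => (N < mdeg p)%N)) /= addrC; congr (_ + _).
rewrite -[LHS]big_filter; apply: perm_big; apply: uniq_perm; rewrite ?filter_uniq ?bm_uniq //.
move=> p; rewrite mem_filter !mem_bm -leqNgt.
by case: (leqP (mdeg p) N) => //= h; apply: leq_trans le.
Qed.

Lemma mnm_ind (P : 'X_{1..n} -> Prop) :
  P 0%MM -> (forall q i, P q -> P (q + U_(i))%MM) -> forall p, P p.
Proof.
move=> P0 PS p; move: {2}(mdeg p) (leqnn (mdeg p)) => d; elim: d p => [|d IH] p Hp.
  by move: Hp; rewrite leqn0 mdeg_eq0 => /eqP ->.
case: (altP (p =P 0%MM)) => [->//|nz].
have [i Hi] : exists i, p i != 0%N.
  apply/existsP; apply: contraR nz; rewrite negb_exists => /forallP H.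
  by apply/eqP/mnmP => i; rewrite mnm0E; apply/eqP; rewrite -[_ == _]negbK H.
have le : (U_(i) <= p)%MM by rewrite lep1mP.
rewrite -(submK le); apply: PS; apply: IH.
move: Hp; rewrite -{1}(submK le) mdegD mdeg1 addn1 ltnS //.
Qed.

Definition mfct (p : 'X_{1..n}) : nat := (\prod_(i < n) (p i)`!)%N.
Lemma mfct_add1 q i : mfct (q + U_(i))%MM = (mfct q * (q i).+1)%N.
Proof.
rewrite /mfct (bigD1 i) //= [in RHS](bigD1 i) //= mnmDE mnm1E eqxx addn1 factS.
rewrite [RHS]mulnC mulnA; congr (_ * _ * _)%N.
by apply: eq_bigr => j ne; rewrite mnmDE mnm1E eq_sym (negbTE ne) addn0.
Qed.
Lemma mfct_gt0 p : (0 < mfct p)%N.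
Proof. by rewrite /mfct prodn_gt0 // => i; rewrite fact_gt0. Qed.
Lemma mfct0 : mfct 0%MM = 1%N.
Proof. by rewrite /mfct big1 // => i _; rewrite mnm0E. Qed.

Definition mpow (g : 'I_n -> R) (p : 'X_{1..n}) : R := \prod_(i < n) g i ^+ p i.
Lemma mpow0 g : mpow g 0%MM = 1.
Proof. by rewrite /mpow big1 // => i _; rewrite mnm0E expr0. Qed.
Lemma mpowS g q i : mpow g (q + U_(i))%MM = mpow g q * g i.
Proof.
rewrite /mpow (bigD1 i) //= [in RHS](bigD1 i) //= mnmDE mnm1E eqxx addn1 exprSr.
rewrite mulrAC; congr (_ * _ * _).
by apply: eq_bigr => j ne; rewrite mnmDE mnm1E eq_sym (negbTE ne) addn0.
Qed.
Lemma ordp_mpow d g p : (forall i, ordp d (g i)) -> ordp (d * mdeg p) (mpow g p).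
Proof.
move=> H; rewrite mdegE big_distrr /=; apply: ordp_prod => i _.
exact: ordp_exp.
Qed.

Lemma mderivXi i j : mderiv i ('X_j : R) = (j == i)%:R.
Proof.
rewrite mderivX mnm1E; case: eqP => [->|_]; last by rewrite scale0r.
have -> : (U_(i) - U_(i) = 0 :> 'X_{1..n})%MM by apply/mnmP=> k; rewrite mnmBE subnn mnm0E.
by rewrite mpolyX0 scale1r.
Qed.

Lemma mnm_swap (q : 'X_{1..n}) i j : i != j -> (q - U_(j) + U_(i) = q + U_(i) - U_(j))%MM.
Proof.
move=> ne; apply/mnmP => k; rewrite !(mnmDE, mnmBE) !mnm1E.
case: (eqVneq j k) => [<-|nek]; first by rewrite (negbTE ne) !addn0.
by rewrite !subn0.
Qed.

Lemma derivmS (p : R) q i : p^`M[q + U_(i)] = mderiv i (p^`M[q]).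
Proof. by rewrite mderivmDm mderivmU1m. Qed.

Lemma mderiv_derivm i q (p : R) : mderiv i (p^`M[q]) = (mderiv i p)^`M[q].
Proof. by rewrite -derivmS addmC mderivmDm mderivmU1m. Qed.

Lemma derivmXM j (W : R) p :
  ('X_j * W)^`M[p] = 'X_j * W^`M[p] + (p j)%:R *: W^`M[p - U_(j)].
Proof.
elim/mnm_ind: p => [|q i IH].
  by rewrite !mderivm0m mnm0E scale0r addr0.
rewrite !derivmS IH mderivD mderivM mderivXi mderivZ.
rewrite mnmDE mnm1E -!derivmS.
case: (eqVneq i j) => [->|ne].
  have E : (q j)%:R *: W^`M[q - U_(j) + U_(j)] = (q j)%:R *: W^`M[q].
    case: (posnP (q j)) => [->|pos]; first by rewrite !scale0r.
    by rewrite submK // lep1mP -lt0n.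
  rewrite E addmK mul1r addn1 -natr1 scalerDl scale1r.
  by rewrite -addrA addrC -addrA.
rewrite [X in X * _](_ : _ = 0) // mul0r add0r addn0; congr (_ + _).
by rewrite mnm_swap.
Qed.

Lemma shift_sum (V : lmodType K) N k (G : 'X_{1..n} -> V) :
  \sum_(p <- bm N.+1) (p k)%:R *: G p =
  \sum_(q <- bm N) (q k).+1%:R *: G (q + U_(k))%MM.
Proof.
rewrite (bigID (fun p : 'X_{1..n} => (0 < p k)%N)) /= [X in _ + X]big1 ?addr0; last first.
  by move=> p; rewrite lt0n negbK => /eqP ->; rewrite scale0r.
rewrite -[LHS]big_filter.
have -> : \sum_(q <- bm N) (q k).+1%:R *: G (q + U_(k))%MM =
          \sum_(p <- map (fun q => q + U_(k))%MM (bm N)) (p k)%:R *: G p.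
  by rewrite [RHS]big_map; apply: eq_bigr => q _; rewrite mnmDE mnm1E eqxx addn1.
apply: perm_big; apply: uniq_perm; rewrite ?filter_uniq ?bm_uniq //.
  by rewrite map_inj_uniq ?bm_uniq //; apply: addIm.
move=> p; rewrite mem_filter mem_bm; apply/andP/mapP => [[pos le]|[q]].
  have le1 : (U_(k) <= p)%MM by rewrite lep1mP -lt0n.
  exists (p - U_(k))%MM; last by rewrite submK.
  by rewrite mem_bm -ltnS; move: le; rewrite -{1}(submK le1) mdegD mdeg1 addn1.
rewrite mem_bm => le ->; rewrite mnmDE mnm1E eqxx addn1 mdegD mdeg1 addn1 ltnS.
by split.
Qed.


Lemma mderiv1 j : mderiv j (1 : R) = 0.
Proof. by rewrite -mpolyC1 mderivC. Qed.

Lemma mderiv_mpow j (g : 'I_n -> R) p :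
  mderiv j (mpow g p) = \sum_(k < n) (p k)%:R *: (mderiv j (g k) * mpow g (p - U_(k))%MM).
Proof.
elim/mnm_ind: p => [|q i IH].
  by rewrite mpow0 mderiv1 big1 // => k _; rewrite mnm0E scale0r.
rewrite mpowS mderivM IH mulr_suml (bigD1 i) //= [in RHS](bigD1 i) //=.
rewrite mnmDE mnm1E eqxx addmK addn1 -natr1 scalerDl scale1r.
have E : (q i)%:R *: (mderiv j (g i) * mpow g (q - U_(i))%MM) * g i =
         (q i)%:R *: (mderiv j (g i) * mpow g q).
  case: (posnP (q i)) => [->|pos]; first by rewrite !scale0r mul0r.
  by rewrite -scalerAl -mulrA -mpowS submK // lep1mP -lt0n.
rewrite E -!addrA; congr (_ + _); rewrite addrC mulrC; congr (_ + _).
apply: eq_bigr => k ne; rewrite mnmDE mnm1E eq_sym (negbTE ne) addn0.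
by rewrite -scalerAl -mulrA -mpowS mnm_swap // eq_sym.
Qed.


Lemma mderiv_prod_seq (I : eqType) (r : seq I) (g : I -> R) j : uniq r ->
  mderiv j (\prod_(k <- r) g k) = \sum_(a <- r) mderiv j (g a) * \prod_(k <- r | k != a) g k.
Proof.
elim: r => [|x r IH] /=; first by rewrite !big_nil mderiv1.
move=> /andP [xr ur]; rewrite !big_cons mderivM IH // eqxx /=; congr (_ + _).
  congr (_ * _); rewrite big_seq_cond [RHS]big_seq_cond; apply: eq_bigl => k.
  by case kr: (k \in r) => //=; apply/esym/eqP => E; move: xr; rewrite -E kr.
rewrite mulr_sumr; apply: eq_big_seq => a ar.
rewrite big_cons. have -> : (x != a) = true by apply/eqP => E; move: xr; rewrite E ar.
by rewrite mulrCA.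
Qed.

Lemma mderiv_signM j (b : bool) (X : R) : mderiv j ((-1) ^+ b * X) = (-1) ^+ b * mderiv j X.
Proof. by case: b; rewrite ?expr0 ?mul1r ?expr1 ?mulN1r ?mderivN. Qed.

Section TOp.
Variable h : 'I_n -> R.
Hypothesis Hh : forall i, ordp 2 (h i).
Hypothesis charK : [pchar K] =i pred0.

Lemma natK_neq0 k : (0 < k)%N -> (k%:R : K) != 0.
Proof. by move=> pos; move/pcharf0P: charK => ->; rewrite -lt0n. Qed.

Lemma eq0_2 (S : R) : S + S = 0 -> S = 0.
Proof.
move=> E; apply/mpolyP => m; move/mpolyP: E => /(_ m).
rewrite mcoeffD mcoeff0 => E.
have : (S@_m) * 2%:R = 0 by rewrite mulr_natr mulr2n.
move/eqP; rewrite mulf_eq0 (negbTE (natK_neq0 _)) // orbF => /eqP ->.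
by rewrite ?mcoeff0 ?raddf0.
Qed.

Definition tterm (V : R) (p : 'X_{1..n}) : R := (mfct p)%:R^-1 *: (V * mpow h p)^`M[p].
Definition Tt N V := \sum_(p <- bm N) tterm V p.

Lemma ttermD V W p : tterm (V + W) p = tterm V p + tterm W p.
Proof. by rewrite /tterm mulrDl mderivmD scalerDr. Qed.
Lemma ttermZ c V p : tterm (c *: V) p = c *: tterm V p.
Proof. by rewrite /tterm -scalerAl mderivmZ !scalerA mulrC. Qed.
Lemma tterm0 p : tterm 0 p = 0.
Proof. by rewrite /tterm mul0r -(scale0r 0) mderivmZ !scale0r scaler0. Qed.

Lemma TtD N V W : Tt N (V + W) = Tt N V + Tt N W.
Proof. by rewrite /Tt -big_split; apply: eq_bigr => p _; apply: ttermD. Qed.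
Lemma TtZ N c V : Tt N (c *: V) = c *: Tt N V.
Proof. by rewrite /Tt scaler_sumr; apply: eq_bigr => p _; apply: ttermZ. Qed.
Lemma Tt0 N : Tt N 0 = 0.
Proof. by rewrite /Tt big1 // => p _; apply: tterm0. Qed.
Lemma TtN N V : Tt N (- V) = - Tt N V.
Proof. by rewrite -scaleN1r TtZ scaleN1r. Qed.
Lemma TtB N V W : Tt N (V - W) = Tt N V - Tt N W.
Proof. by rewrite TtD TtN. Qed.
Lemma Tt_sum N (I : Type) (r : seq I) (P : pred I) (F : I -> R) :
  Tt N (\sum_(i <- r | P i) F i) = \sum_(i <- r | P i) Tt N (F i).
Proof. exact: (big_morph (Tt N) (TtD N) (Tt0 N)). Qed.

Lemma ordp_tterm d V p : ordp d V -> ordp (d + mdeg p) (tterm V p).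
Proof.
move=> HV; apply: ordpZ; apply: ordp_derivm; rewrite -addnA addnn -mul2n.
apply: ordpM => //; exact: ordp_mpow.
Qed.

Lemma Tt_ord d N V : ordp d V -> ordp d (Tt N V).
Proof.
move=> HV; apply: ordp_sum => p _; apply: (@ordp_le (d + mdeg p)); first exact: leq_addr.
exact: ordp_tterm.
Qed.

Lemma Tt_N N N' V : (N <= N')%N -> ordp N.+1 (Tt N' V - Tt N V).
Proof.
move=> le; rewrite /Tt (bm_split _ le) addrAC subrr add0r.
apply: ordp_sum => p lt; apply: (@ordp_le (0 + mdeg p)) => //.
exact: ordp_tterm.
Qed.

Lemma TtX N V j : Tt N.+1 (V * 'X_j) = 'X_j * Tt N.+1 V + Tt N (V * h j).
Proof.
rewrite /Tt mulr_sumr.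
rewrite (eq_bigr (fun p => 'X_j * tterm V p + (p j)%:R *: ((mfct p)%:R^-1 *:
   (V * mpow h p)^`M[p - U_(j)]))); last first.
  move=> p _; rewrite /tterm -mulrA mulrCA.
  by rewrite derivmXM scalerDr scalerAr !scalerA [_^-1 * _]mulrC.
rewrite big_split /=; congr (_ + _); rewrite shift_sum; apply: eq_bigr => q _.
rewrite scalerA mfct_add1 natrM invfM mulrA mulrAC mulfV ?natK_neq0 // mul1r addmK.
by rewrite mpowS /tterm -mulrA [mpow h q * _]mulrC mulrA.
Qed.

Definition fv j : R := 'X_j - h j.

Lemma TtF N V j : ordp N.+1 (Tt N.+1 (V * fv j) - 'X_j * Tt N.+1 V).
Proof.
rewrite /fv mulrBr TtB TtX.
have -> : 'X_j * Tt N.+1 V + Tt N (V * h j) - Tt N.+1 (V * h j) - 'X_j * Tt N.+1 V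
   = - (Tt N.+1 (V * h j) - Tt N (V * h j)) by ring.
by apply: ordpN; apply: Tt_N.
Qed.

Lemma TtFpow N V a : ordp N.+1 (Tt N.+1 (V * mpow fv a) - 'X_[a] * Tt N.+1 V).
Proof.
elim/mnm_ind: a => [|a i IH]; first by rewrite mpow0 mpolyX0 mulr1 mul1r subrr; apply: ordp0.
rewrite mpowS mulrA mpolyXD.
have -> : Tt N.+1 (V * mpow fv a * fv i) - 'X_[a] * 'X_i * Tt N.+1 V =
  (Tt N.+1 (V * mpow fv a * fv i) - 'X_i * Tt N.+1 (V * mpow fv a)) +
  'X_i * (Tt N.+1 (V * mpow fv a) - 'X_[a] * Tt N.+1 V) by ring.
apply: ordpD; first exact: TtF.
by rewrite -[N.+1]add0n; apply: ordpM.
Qed.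

Lemma TtSum N (r : seq 'X_{1..n}) (c : 'X_{1..n} -> K) :
  ordp N.+1 (Tt N.+1 (\sum_(a <- r) c a *: mpow fv a) -
             (\sum_(a <- r) c a *: 'X_[a]) * Tt N.+1 1).
Proof.
rewrite Tt_sum mulr_suml -sumrB; apply: ordp_sum => a _.
rewrite TtZ -scalerAl -scalerBr; apply: ordpZ.
by have := @TtFpow N 1 a; rewrite mul1r.
Qed.

Lemma TtDeriv N V j :
  Tt N.+1 (mderiv j V) = mderiv j (Tt N.+1 V) - \sum_(k < n) mderiv k (Tt N (V * mderiv j (h k))).
Proof.
have E1 : forall p, tterm (mderiv j V) p = mderiv j (tterm V p) -
   \sum_(k < n) (p k)%:R *: ((mfct p)%:R^-1 *: (V * mderiv j (h k) * mpow h (p - U_(k))%MM)^`M[p]).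
  move=> p; rewrite /tterm mderivZ mderiv_derivm mderivM.
  set S := \sum_(k < n) _.
  suff -> : S = (mfct p)%:R^-1 *: (V * mderiv j (mpow h p))^`M[p].
    by rewrite mderivmD scalerDr addrK.
  rewrite /S mderiv_mpow mulr_sumr raddf_sum scaler_sumr; apply: eq_bigr => k _.
  rewrite -scalerAr [X in _ = _ *: X](_ : _ = (p k)%:R *:
     (V * mderiv j (h k) * mpow h (p - U_(k))%MM)^`M[p]); last by rewrite /= -mderivmZ mulrA.
  by rewrite !scalerA mulrC.
rewrite /Tt (eq_bigr _ (fun p _ => E1 p)) sumrB (raddf_sum (mderiv j)); congr (_ - _).
rewrite exchange_big /=; apply: eq_bigr => k _.
rewrite shift_sum raddf_sum; apply: eq_bigr => q _.
rewrite scalerA mfct_add1 natrM invfM mulrA mulrAC mulfV ?natK_neq0 // mul1r addmK.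
by rewrite /= /tterm mderivZ derivmS.
Qed.

Lemma TtDivF N V j :
  ordp N (\sum_(k < n) mderiv k (Tt N.+1 (V * mderiv j (fv k))) - Tt N.+1 (mderiv j V)).
Proof.
rewrite TtDeriv.
have -> : \sum_(k < n) mderiv k (Tt N.+1 (V * mderiv j (fv k))) =
   mderiv j (Tt N.+1 V) - \sum_(k < n) mderiv k (Tt N.+1 (V * mderiv j (h k))).
  rewrite /fv (eq_bigr (fun k => mderiv k (Tt N.+1 (V * (k == j)%:R)) -
     mderiv k (Tt N.+1 (V * mderiv j (h k))))); last first.
    by move=> k _; rewrite mderivB mderivXi mulrBr TtB mderivB.
  rewrite sumrB (bigD1 j) //= eqxx mulr1 big1 ?addr0 // => k ne.
  by rewrite (negbTE ne) mulr0 Tt0 mderiv0.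
have -> : forall a b c : R, a - b - (a - c) = - (b - c) by move=> a b c; ring.
apply: ordpN; rewrite -sumrB; apply: ordp_sum => k _; rewrite -mderivB.
by apply: ordp_deriv; apply: Tt_N.
Qed.

Lemma const_ord N (P : R) : (forall l, ordp N (mderiv l P)) -> ordp N.+1 (P - (P@_0%MM)%:MP).
Proof.
move=> H m lt; rewrite mcoeffB mcoeffC.
case: (altP (m =P 0%MM)) => [->|nz]; first by rewrite ?eqxx ?mulr1 subrr.
rewrite [false%:R](_ : _ = 0) //.
rewrite mulr0 subr0.
have [l Hl] : exists l, m l != 0%N.
  apply/existsP; apply: contraR nz; rewrite negb_exists => /forallP Hm.
  by apply/eqP/mnmP => i; rewrite mnm0E; apply/eqP; rewrite -[_ == _]negbK Hm.
have le : (U_(l) <= m)%MM by rewrite lep1mP.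
have := H l (m - U_(l))%MM; rewrite mcoeff_mderiv submK //.
have -> : (mdeg (m - U_(l)) < N)%N by move: lt; rewrite -{1}(submK le) mdegD mdeg1 addn1 ltnS.
move=> /(_ isT) /eqP; rewrite -mulr_natr mulf_eq0 (negbTE (natK_neq0 _)) // orbF.
by move/eqP.
Qed.

Lemma Tt1_0 N : (Tt N 1)@_0%MM = 1.
Proof.
rewrite /Tt raddf_sum (bigD1_seq 0%MM) ?bm_uniq ?mem_bm ?mdeg0 //= big1 ?addr0.
  by rewrite /tterm mfct0 mpow0 mulr1 mderivm0m invr1 scale1r mcoeff1 eqxx.
move=> p ne; have := @ordp_tterm 0 1 p (ordpn0 _); rewrite add0n => H.
by apply: H; rewrite mdeg0 lt0n mdeg_eq0.
Qed.

Definition Jm : 'M[R]_n := \matrix_(j, k) mderiv j (fv k).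

Lemma piola (g : 'I_n -> R) l :
  \sum_(j < n) mderiv j ((\adj (\matrix_(j, k) mderiv j (g k) : 'M[R]_n)) l j) = 0.
Proof.
set A := \matrix_(j, k) _.
pose Phi (j a : 'I_n) (s : 'S_n) : R := if (s j == l) && (j != a) then
  (-1) ^+ s * (mderiv j (mderiv a (g (s a))) * \prod_(k | (j != k) && (k != a)) A k (s k))
  else 0.
have E : forall j, mderiv j (\adj A l j) = \sum_a \sum_s Phi j a s.
  move=> j; rewrite mxE expand_cofactor raddf_sum /= exchange_big /=.
  rewrite [RHS](bigID (fun s : 'S_n => s j == l)) /= [X in _ + X]big1 ?addr0; last first.
    by move=> s /negbTE sj; apply: big1 => a _; rewrite /Phi sj.
  apply: eq_bigr => s sj; rewrite mderiv_signM -big_filter mderiv_prod_seq; last first.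
    by rewrite filter_uniq // index_enum_uniq.
  rewrite big_filter mulr_sumr big_mkcond /=; apply: eq_bigr => a _.
  rewrite /Phi sj /=; case: ifP => // ja; congr (_ * (_ * _)).
    by rewrite mxE.
  by rewrite big_filter_cond.
have anti : forall j a, \sum_s Phi a j s = - \sum_s Phi j a s.
  move=> j a; case: (eqVneq j a) => [<-|ne].
    by rewrite big1 ?oppr0 // => s _; rewrite /Phi eqxx andbF.
  rewrite (reindex_inj (mulgI (tperm j a))) /= -sumrN; apply: eq_bigr => s _.
  rewrite /Phi !permM tpermR tpermL [a == j]eq_sym.
  case: ifP => _; last by rewrite oppr0.
  rewrite odd_mul_tperm ne /= mderiv_comm.
  have -> : (-1) ^+ (~~ odd_perm s) = - (-1) ^+ (odd_perm s) :> R.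
    by case: (odd_perm s); rewrite ?expr0 ?expr1 ?opprK.
  rewrite mulNr; congr (- (_ * (_ * _))).
  apply: eq_big => k; first by rewrite andbC [a == k]eq_sym [k == j]eq_sym.
  move=> /andP [jk ka]; rewrite permM tpermD // eq_sym //.
set S := \sum_j \sum_a \sum_s Phi j a s.
have SS : S = - S.
  rewrite {1}/S exchange_big /= -sumrN; apply: eq_bigr => x _.
  rewrite -sumrN; apply: eq_bigr => y _; exact: anti.
rewrite (eq_bigr _ (fun j _ => E j)) -/S; apply: eq0_2.
by rewrite {1}SS addNr.
Qed.

Lemma Tt1 N : ordp N.+1 (\det Jm - 1) -> ordp N.+1 (Tt N.+1 1 - 1).
Proof.
move=> HJ.
have D : forall l, ordp N (mderiv l (Tt N.+1 (\det Jm))).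
  move=> l.
  have H : ordp N (\sum_(j < n) (\sum_(k < n) mderiv k (Tt N.+1 (\adj Jm l j * mderiv j (fv k)))
                 - Tt N.+1 (mderiv j (\adj Jm l j)))).
    by apply: ordp_sum => j _; apply: TtDivF.
  rewrite sumrB -Tt_sum piola Tt0 subr0 exchange_big /= in H.
  suff <- : \sum_(k < n) \sum_(j < n) mderiv k (Tt N.+1 (\adj Jm l j * mderiv j (fv k))) =
            mderiv l (Tt N.+1 (\det Jm)) by [].
  rewrite (eq_bigr (fun k => mderiv k (Tt N.+1 ((\adj Jm *m Jm) l k)))); last first.
    move=> k _; rewrite -raddf_sum -Tt_sum mxE; congr (mderiv k (Tt _ _)).
    by apply: eq_bigr => j _; rewrite [(\matrix_(_, _) _) j k]mxE.
  rewrite mul_adj_mx (bigD1 l) //= big1 ?addr0 ?mxE ?eqxx ?mulr1n //.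
  by move=> k ne; rewrite mxE eq_sym (negbTE ne) mulr0n Tt0 mderiv0.
have D1 : forall l, ordp N (mderiv l (Tt N.+1 1)).
  move=> l; have -> : Tt N.+1 1 = Tt N.+1 (\det Jm) - Tt N.+1 (\det Jm - 1).
    by rewrite TtB; ring.
  rewrite mderivB; apply: ordpB; first exact: D.
  by apply: ordp_deriv; apply: Tt_ord.
by have := const_ord D1; rewrite Tt1_0 mpolyC1.
Qed.

Theorem core N (r : seq 'X_{1..n}) (c : 'X_{1..n} -> K) :
  ordp N.+1 (\det Jm - 1) ->
  ordp N.+1 (Tt N.+1 (\sum_(a <- r) c a *: mpow fv a) - \sum_(a <- r) c a *: 'X_[a]).
Proof.
move=> HJ; have := @TtSum N r c; set u := \sum_(a <- r) _ *: 'X_[a] => H.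
have -> : forall x : R, x - u = (x - u * Tt N.+1 1) + u * (Tt N.+1 1 - 1) by move=> x; ring.
apply: ordpD => //; rewrite -[N.+1]add0n; apply: ordpM => //; exact: Tt1.
Qed.
End TOp.
End Core.


Section Transfer.
Variables (K : fieldType) (n : nat).
Local Notation R := {mpoly K[n]}.
Local Notation fps := (fps K n).

Definition tomn (m : mono n) : 'X_{1..n} := [multinom m i | i < n].
Definition frmn (m : 'X_{1..n}) : mono n := [ffun i => m i].
Lemma tomnE m i : tomn m i = m i. Proof. by rewrite mnmE. Qed.
Lemma frmnE m i : frmn m i = m i. Proof. by rewrite ffunE. Qed.
Lemma tomnK : cancel tomn frmn. Proof. by move=> m; apply/ffunP => i; rewrite frmnE tomnE. Qed.
Lemma frmnK : cancel frmn tomn. Proof. by move=> m; apply/mnmP => i; rewrite tomnE frmnE. Qed.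
Lemma mdeg_tomn m : mdeg (tomn m) = Defs.mdeg m.
Proof. by rewrite mdegE /Defs.mdeg; apply: eq_bigr => i _; rewrite tomnE. Qed.
Lemma mdeg_frmn m : Defs.mdeg (frmn m) = mdeg m.
Proof. by rewrite -mdeg_tomn frmnK. Qed.

Definition agree E (f : fps) (P : R) :=
  forall m : mono n, (Defs.mdeg m <= E)%N -> f m = P@_(tomn m).

Lemma agree_le E E' f P : (E' <= E)%N -> agree E f P -> agree E' f P.
Proof. by move=> le H m lm; apply: H; apply: leq_trans le. Qed.

Lemma agree_add E f g P Q : agree E f P -> agree E g Q -> agree E (fps_add f g) (P + Q).
Proof. by move=> Hf Hg m lm; rewrite /fps_add mcoeffD Hf ?Hg. Qed.
Lemma agree_sub E f g P Q : agree E f P -> agree E g Q -> agree E (fps_sub f g) (P - Q).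
Proof. by move=> Hf Hg m lm; rewrite /fps_sub mcoeffB Hf ?Hg. Qed.
Lemma agree_scale E c f P : agree E f P -> agree E (fps_scale c f) (c *: P).
Proof. by move=> Hf m lm; rewrite /fps_scale mcoeffZ Hf. Qed.
Lemma agree0 E : agree E (@fps0 K n) 0.
Proof. by move=> m _; rewrite mcoeff0. Qed.

Lemma tomn_eq0 m : (tomn m == 0%MM) = (m == mzero n).
Proof.
apply/eqP/eqP => [E|->]; last by apply/mnmP => i; rewrite tomnE mnm0E ffunE.
by apply/ffunP => i; rewrite ffunE -tomnE E mnm0E.
Qed.
Lemma agree1 E : agree E (@fps1 K n) 1.
Proof. by move=> m _; rewrite /fps1 mcoeff1 tomn_eq0; case: eqP. Qed.
Lemma agreeX E i : agree E (fps_X i) ('X_i : R).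
Proof.
move=> m _; rewrite /fps_X mcoeffX.
have -> : (U_(i)%MM == tomn m) = (m == munit i).
  apply/eqP/eqP => [E'|->]; last by apply/mnmP => j; rewrite tomnE mnm1E ffunE.
  by apply/ffunP => j; rewrite ffunE -tomnE -E' mnm1E.
by case: eqP.
Qed.

Lemma le_mdeg (m : mono n) i : (m i <= Defs.mdeg m)%N.
Proof. by rewrite /Defs.mdeg (bigD1 i) //= leq_addr. Qed.

Lemma box_sum (V : nmodType) d (G : mono n -> V) :
  (forall p, (d < Defs.mdeg p)%N -> G p = 0) ->
  \sum_(a : {ffun 'I_n -> 'I_d.+1}) G (mlow a) = \sum_(x <- bm n d) G (frmn x).
Proof.
move=> G0; rewrite -(big_map (@mlow n d.+1) xpredT G) -(big_map frmn xpredT G).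
apply: (@sum_supp _ _ _ _ (fun p => Defs.mdeg p <= d)%N).
- rewrite map_inj_uniq ?index_enum_uniq // => a b E; apply/ffunP => i.
  by apply: val_inj; move/ffunP: E => /(_ i); rewrite !ffunE.
- by rewrite map_inj_uniq ?bm_uniq //; apply: (can_inj frmnK).
- by move=> p; rewrite -ltnNge; apply: G0.
move=> p le; apply/idP/idP => _.
  apply/mapP; exists (tomn p); first by rewrite mem_bm mdeg_tomn.
  by rewrite tomnK.
apply/mapP; exists [ffun i => inord (p i)]; first by rewrite mem_index_enum.
apply/ffunP => i; rewrite !ffunE inordK // ltnS; apply: leq_trans le; exact: le_mdeg.
Qed.

Lemma tomn_msub m x : tomn (msub m (frmn x)) = (tomn m - x)%MM.
Proof. by apply/mnmP => i; rewrite tomnE mnmBE ffunE frmnE tomnE. Qed.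
Lemma mle_frmn m x : mle (frmn x) m = (x <= tomn m)%MM.
Proof.
apply/forallP/mnm_lepP => H i.
  by have := H i; rewrite /frmn ffunE tomnE.
by have := H i; rewrite /frmn ffunE tomnE.
Qed.

Lemma agree_mul E f g P Q : agree E f P -> agree E g Q -> agree E (fps_mul f g) (P * Q).
Proof.
move=> Hf Hg m lm; rewrite /fps_mul.
pose G (p : mono n) := if mle p m then f p * g (msub m p) else 0.
rewrite big_mkcond /= (eq_bigr (fun a => G (mlow a))) // box_sum; last first.
  move=> p lt; rewrite /G; case: ifP => // /forallP le; move: lt; rewrite ltnNge.
  by rewrite /Defs.mdeg leq_sum.
have := @mcoeff_poly_mul_lin n K P Q (tomn m) (mdeg (tomn m)).+1 (ltnSn _).
rewrite /mpoly_mul => ->; rewrite [RHS]big_mkcond /=.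
rewrite (sum_bm _ (fun x => if (x <= tomn m)%MM then P@_x * Q@_(tomn m - x) else 0)) mdeg_tomn.
apply: eq_big_seq => x; rewrite mem_bm => lx.
rewrite /G mle_frmn; case: ifP => // le.
rewrite Hf ?Hg ?frmnK ?tomn_msub //; last by rewrite mdeg_frmn; apply: leq_trans lx lm.
rewrite -mdeg_tomn tomn_msub; apply: leq_trans lm; rewrite -mdeg_tomn; exact: mdegB.
Qed.


Lemma agree_exp E f P k : agree E f P -> agree E (fps_exp f k) (P ^+ k).
Proof.
move=> Hf; elim: k => [|k IH]; first by rewrite expr0; apply: agree1.
by rewrite exprS /fps_exp iterS; apply: agree_mul.
Qed.

Lemma agree_mpow E (Fs : 'I_n -> fps) (g : 'I_n -> R) p :
  (forall i, agree E (Fs i) (g i)) -> agree E (fps_mpow Fs p) (mpow g (tomn p)).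
Proof.
move=> HF; rewrite /fps_mpow /mpow.
apply: (big_ind2 (fun f P => agree E f P)); first exact: agree1.
  by move=> ? ? ? ? ? ?; apply: agree_mul.
by move=> i _; rewrite tomnE; apply: agree_exp.
Qed.

Lemma tomn_madd1 m i : tomn (madd m (munit i)) = (tomn m + U_(i))%MM.
Proof. by apply/mnmP => j; rewrite mnmDE !tomnE mnm1E !ffunE. Qed.

Lemma agree_deriv E i f P : agree E.+1 f P -> agree E (fps_deriv i f) (mderiv i P).
Proof.
move=> Hf m lm; rewrite /fps_deriv mcoeff_mderiv Hf; last first.
  by rewrite -mdeg_tomn tomn_madd1 mdegD mdeg1 addn1 ltnS mdeg_tomn.
by rewrite tomn_madd1 mulr_natl tomnE.
Qed.

Lemma agree_iter k E i f P :
  agree (E + k) f P -> agree E (iter k (fps_deriv i) f) (iter k (mderiv i) P).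
Proof.
elim: k E => [|k IH] E H; first by move: H; rewrite addn0.
rewrite !iterS; apply: agree_deriv; apply: IH; by rewrite addSnnS.
Qed.

Lemma agree_derivs E p f P :
  agree (E + Defs.mdeg p) f P -> agree E (fps_derivs p f) (P^`M[tomn p]).
Proof.
have -> : Defs.mdeg p = (\sum_(i <- enum 'I_n) p i)%N by rewrite /Defs.mdeg enumT.
rewrite /fps_derivs /mderivm; elim: (enum 'I_n) E => [|x s IH] E H /=.
  by move: H; rewrite big_nil addn0.
rewrite tomnE; apply: agree_iter; apply: IH.
by move: H; rewrite big_cons addnA [(E + _)%N]addnC.
Qed.

Lemma agree_det E (M : 'I_n -> 'I_n -> fps) (A : 'M[R]_n) :
  (forall i j, agree E (M i j) (A i j)) -> agree E (fps_det M) (\det A).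
Proof.
move=> HM; rewrite /fps_det /determinant.
apply: (big_ind2 (fun f P => agree E f P)); first exact: agree0.
  by move=> ? ? ? ? ? ?; apply: agree_add.
move=> s _.
have -> : ((-1) ^+ s * \prod_i A i (s i) : R) = ((-1) ^+ s : K) *: \prod_i A i (s i).
  by case: (odd_perm s); rewrite ?expr0 ?mul1r ?scale1r ?expr1 ?mulN1r ?scaleN1r.
apply: agree_scale; apply: (big_ind2 (fun f P => agree E f P)); first exact: agree1.
  by move=> ? ? ? ? ? ?; apply: agree_mul.
by move=> i _; apply: HM.
Qed.

Definition trunc E (f : fps) : R := \sum_(a <- bm n E) f (frmn a) *: 'X_[a].

Lemma coef_trunc E f x : (trunc E f)@_x = if (mdeg x <= E)%N then f (frmn x) else 0.
Proof.
rewrite /trunc raddf_sum /=; case: ifP => lx.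
  rewrite (bigD1_seq x) ?bm_uniq ?mem_bm //= big1 ?addr0.
    by rewrite mcoeffZ mcoeffX eqxx mulr1.
  by move=> a ne; rewrite mcoeffZ mcoeffX (negbTE ne) mulr0.
rewrite big_seq big1 // => a; rewrite mem_bm => la; rewrite mcoeffZ mcoeffX.
by case: eqP => [E'|]; [move: la; rewrite E' lx | rewrite mulr0].
Qed.

Lemma agree_trunc E f : agree E f (trunc E f).
Proof. by move=> m lm; rewrite coef_trunc mdeg_tomn lm tomnK. Qed.

Lemma agree_comp E U (Fs : 'I_n -> fps) (g : 'I_n -> R) :
  (forall i, agree E (Fs i) (g i)) -> (forall i, ordp 1 (g i)) ->
  agree E (fps_comp U Fs) (\sum_(a <- bm n E) U (frmn a) *: mpow g a).
Proof.
move=> HF Hg m lm.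
pose G (p : mono n) := U p * (mpow g (tomn p))@_(tomn m).
have Hv : forall a, (mdeg (tomn m) < mdeg a)%N -> (mpow g a)@_(tomn m) = 0.
  by move=> a lt; apply: (ordp_mpow (d:=1)) => //; rewrite mul1n.
rewrite /fps_comp (eq_bigr (fun p => G (mlow p))); last first.
  by move=> p _; rewrite /G (@agree_mpow E Fs g (mlow p) HF m lm).
rewrite box_sum; last by move=> p lt; rewrite /G Hv ?mulr0 // !mdeg_tomn.
rewrite raddf_sum /=; apply/esym.
rewrite [RHS](eq_bigr (fun a => (U (frmn a) *: mpow g a)@_(tomn m))); last first.
  by move=> a _; rewrite /G mcoeffZ frmnK.
apply: (@sum_supp _ _ _ _ (fun a => mdeg a <= Defs.mdeg m)%N); rewrite ?bm_uniq //.
  by move=> a; rewrite -ltnNge -mdeg_tomn => lt; rewrite mcoeffZ Hv ?mulr0.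
move=> a la; rewrite !mem_bm la; exact: leq_trans la lm.
Qed.
End Transfer.


Section Final.
Variables (K : fieldType) (n : nat) (F : 'I_n -> fps K n).
Hypothesis charK : [pchar K] =i pred0.
Hypothesis Hdeg : forall (i : 'I_n) (m : mono n),
     (Defs.mdeg m < 2)%N -> fps_sub (fps_X i) (F i) m = 0.
Hypothesis Hjac : fps_det (fun i j => fps_deriv i (F j)) = @fps1 K n.
Local Notation R := {mpoly K[n]}.

Definition Hf i := fps_sub (fps_X i) (F i).
Definition hE E i : R := trunc E (Hf i).

Lemma ordp_hE E i : ordp 2 (hE E i).
Proof.
move=> m lt; rewrite /hE coef_trunc; case: ifP => // _.
by apply: Hdeg; rewrite mdeg_frmn.
Qed.

Lemma agreeF E i : agree E (F i) (fv (hE E) i).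
Proof.
move=> m lm; rewrite /fv mcoeffB -(agreeX K i lm) -(agree_trunc (Hf i) lm).
rewrite /Hf /fps_sub; ring.
Qed.

Lemma ordp_fv E i : ordp 1 (fv (hE E) i).
Proof.
apply: ordpB; first by have := @ordpXm K n (U_(i))%MM; rewrite mdeg1.
by apply: (@ordp_le _ _ 2); last exact: ordp_hE.
Qed.

Lemma det_ord E D : (D.+1 <= E)%N -> ordp D.+1 (\det (Jm (hE E)) - 1).
Proof.
move=> le x lx.
have A : agree E.-1 (fps_det (fun i j => fps_deriv i (F j))) (\det (Jm (hE E))).
  apply: agree_det => i j; rewrite /Jm mxE; apply: agree_deriv.
  by rewrite prednK ?(leq_trans _ le) //; apply: agreeF.
have lx' : (Defs.mdeg (frmn x) <= E.-1)%N.
  by rewrite mdeg_frmn -ltnS prednK ?(leq_trans _ le) //; apply: leq_trans le.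
by rewrite mcoeffB -(frmnK x) -(A _ lx') Hjac (agree1 K lx') subrr.
Qed.

Definition wE E U : R := \sum_(a <- bm n E) U (frmn a) *: mpow (fv (hE E)) a.

Lemma term_eq E U p m0 : (Defs.mdeg m0 + Defs.mdeg p <= E)%N ->
  fps_scale (mfact p)%:R^-1 (fps_derivs p (fps_mul (fps_comp U F) (fps_mpow Hf p))) m0
  = (tterm (hE E) (wE E U) (tomn p))@_(tomn m0).
Proof.
move=> le; rewrite /fps_scale /tterm mcoeffZ.
have -> : mfact p = mfct (tomn p).
  by rewrite /mfact /mfct; apply: eq_bigr => i _; rewrite tomnE.
congr (_ * _).
have A : agree E (fps_mul (fps_comp U F) (fps_mpow Hf p)) (wE E U * mpow (hE E) (tomn p)).
  apply: agree_mul; first by apply: agree_comp; [apply: agreeF | apply: ordp_fv].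
  by apply: agree_mpow => i; apply: agree_trunc.
by apply: (agree_derivs (agree_le le A)).
Qed.

Lemma main2 U : fps_has_sum (fun p => fps_scale (mfact p)%:R^-1
        (fps_derivs p (fps_mul (fps_comp U F) (fps_mpow Hf p)))) U.
Proof.
move=> m0; set D := Defs.mdeg m0; set E := (D + D.+1)%N.
exists (map (@frmn n) (bm n D.+1)); split.
- by rewrite map_inj_uniq ?bm_uniq //; apply: (can_inj (@frmnK n)).
- move=> p pn; have lt : (D.+1 < Defs.mdeg p)%N.
    rewrite ltnNge; apply: contra pn => le; apply/mapP; exists (tomn p); last by rewrite tomnK.
    by rewrite mem_bm mdeg_tomn.
  rewrite (@term_eq (D + Defs.mdeg p)) //.
  apply: (@ordp_tterm _ _ _ (ordp_hE _) 0 _ _ (ordpn0 _)).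
  by rewrite add0n !mdeg_tomn; apply: ltn_trans lt.
rewrite big_map (eq_big_seq (fun x => (tterm (hE E) (wE E U) x)@_(tomn m0))); last first.
  move=> x; rewrite mem_bm => lx; rewrite (@term_eq E) ?frmnK //.
  by rewrite mdeg_frmn leq_add2l.
rewrite -raddf_sum -/(Tt (hE E) D.+1 (wE E U)).
have C := core (@ordp_hE E) charK (bm n E) (fun a => U (frmn a)) (det_ord (leq_addl D D.+1)).
have := C (tomn m0); rewrite mdeg_tomn => /(_ (ltnSn _)).
rewrite mcoeffB => /eqP; rewrite subr_eq0 => /eqP E1.
rewrite /wE /= E1.
rewrite -/(trunc E U) coef_trunc mdeg_tomn tomnK leq_addr //.
Qed.
End Final.

Unset Implicit Arguments.

Theorem mainTheorem1 (K : fieldType) (n : nat) (F G : 'I_n -> fps K n)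
  (charK : [pchar K] =i pred0)
  (Hdeg : forall (i : 'I_n) (m : mono n),
     (Defs.mdeg m < 2)%N -> fps_sub (fps_X i) (F i) m = 0)
  (Hjac : fps_det (fun i j => fps_deriv i (F j)) = @fps1 K n)
  (HGF : forall i, fps_comp (G i) F = fps_X i)
  (HFG : forall i, fps_comp (F i) G = fps_X i) :
  let H := fun j => fps_sub (fps_X j) (F j) in
  (forall i : 'I_n,
     fps_has_sum (fun p => fps_scale (mfact p)%:R^-1
                    (fps_derivs p (fps_mul (fps_X i) (fps_mpow H p))))
                 (G i))
  /\
  (forall U : fps K n,
     fps_has_sum (fun p => fps_scale (mfact p)%:R^-1
                    (fps_derivs p (fps_mul (fps_comp U F) (fps_mpow H p))))
                 U).
Proof.
move=> H; split; last exact: (main2 charK Hdeg Hjac).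
by move=> i; have := main2 charK Hdeg Hjac (G i); rewrite HGF.
Qed.
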